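(* For each $n\ge1$ there exist $N\ge1$, rational numbers $a_1,\dots,a_N\in\mathbb{Q}$ and integer valued positive definite quadratic forms $Q_1,\dots,Q_N$ on $\mathbb{Z}^n$ such that \[ \Theta_n(q)=\sum_{i=1}^N a_i\,\Theta_{Q_i}(q), \] where $\Theta_n(q)=\sum_{(k_1,\dots,k_n)\in\mathbb{Z}^n}q^{\sum_{1\le i\le j\le n}k_ik_j}e^{\frac{2\pi\sqrt{-1}}{n+2}(k_1+2k_2+\cdots+nk_n)}$ and, for a quadratic form $Q$, $\Theta_Q(q)=\sum_{(k_1,\dots,k_n)\in\mathbb{Z}^n}q^{Q(k_1,\dots,k_n)}$.
   Context: An integer valued positive definite quadratic form on $\mathbb{Z}^n$ is a quadratic form $Q$ with $Q(\mathbb{Z}^n)\subset\mathbb{Z}$ whose real extension is positive definite. *)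

(* Defs.v *)
From HB Require Import structures.
From mathcomp Require Import all_boot all_order all_algebra.
From mathcomp Require Import all_classical all_reals.
From mathcomp Require Import trigo.
From mathcomp Require Import complex.

Set Implicit Arguments.
Unset Strict Implicit.
Unset Printing Implicit Defensive.

Import Order.TTheory GRing.Theory Num.Theory.
Local Open Scope ring_scope.
Local Open Scope classical_set_scope.

Definition qform (R : realType) (n : nat) (A : 'M[R]_n) (x : 'rV[R]_n) : R :=
  (x *m A *m x^T) 0 0.

Definition zvec (R : realType) (n : nat) (k : 'rV[int]_n) : 'rV[R]_n :=
  map_mx (fun z : int => z%:~R) k.

Definition int_valued_posdef (R : realType) (n : nat) (A : 'M[R]_n) : Prop :=
  (forall k : 'rV[int]_n, exists z : int, qform A (zvec R k) = z%:~R) /\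
  (forall x : 'rV[R]_n, x != 0 -> 0 < qform A x).

(* coefficient of q^m in Theta_Q(q) = sum_{k in Z^n} q^{Q(k)}, i.e. the number
   of k in Z^n with Q(k) = m (a finite set since Q is positive definite),
   viewed in the complex numbers R[i]. *)
Definition thetaQ_coef (R : realType) (n : nat) (A : 'M[R]_n) (m : nat) : R[i] :=
  \sum_(k \in [set k : 'rV[int]_n | qform A (zvec R k) = m%:R]) (1 : R[i]).

Definition Qn (n : nat) (k : 'rV[int]_n) : int :=
  \sum_(i < n) \sum_(j < n | (i <= j)%N) k 0 i * k 0 j.

Definition zeta (R : realType) (n : nat) : R[i] :=
  (cos (2 * pi / (n.+2)%:R) +i* sin (2 * pi / (n.+2)%:R))%C.

Definition lin_n (n : nat) (k : 'rV[int]_n) : int :=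
  \sum_(i < n) (i.+1)%:Z * k 0 i.

(* coefficient of q^m in Theta_n(q) *)
Definition thetan_coef (R : realType) (n : nat) (m : nat) : R[i] :=
  \sum_(k \in [set k : 'rV[int]_n | Qn k = m%:Z]) (zeta R n) ^ (lin_n k).

(* Main.v *)
Require Import Defs.
From HB Require Import structures.
From mathcomp Require Import all_boot all_order all_algebra.
From mathcomp Require Import all_classical all_reals.
From mathcomp Require Import trigo.
From mathcomp Require Import complex.
From mathcomp Require Import ring lra zify.
From mathcomp Require Import fingroup perm.
Import Order.TTheory GRing.Theory Num.Theory.
Local Open Scope ring_scope.

Section Zeta.
Variable R : realType.
Definition cc (x : R) : R[i] := (cos x +i* sin x)%C.
Lemma ccD x y : cc x * cc y = cc (x + y).
Proof. rewrite /cc sinD cosD. simpc. congr (_ +i* _)%C; ring. Qed.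
Lemma cc0 : cc 0 = 1.
Proof. by rewrite /cc cos0 sin0. Qed.
Lemma ccX k x : cc x ^+ k = cc (k%:R * x).
Proof.
elim: k => [|k IH]; first by rewrite expr0 mul0r cc0.
by rewrite exprS IH ccD mulrSr mulrDl mul1r addrC.
Qed.

Lemma cos_lt1 (x : R) : 0 < x < pi *+ 2 -> cos x < 1.
Proof.
move=> /andP[x0 x2].
have hpi := pi_gt0 R.
case: (lerP x pi) => xpi.
  rewrite -cos0 ltr_cos // in_itv /=; apply/andP; split; lra.
have -> : cos x = cos (pi *+ 2 - x).
  by rewrite cosB cos2pi sin2pi mul1r mul0r addr0.
rewrite -cos0 ltr_cos; [lra| |]; rewrite in_itv /=; apply/andP; split; lra.
Qed.

Variable n : nat.
Local Notation N := n.+2.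
Local Notation th := (2 * pi / (n.+2)%:R : R).
Local Notation z := (zeta R n).

Lemma zeta_cc : z = cc th.
Proof. by []. Qed.

Lemma zetaXN : z ^+ N = 1.
Proof.
rewrite zeta_cc ccX.
have -> : (N%:R * th) = pi *+ 2.
  rewrite mulr2n. field. have : (0:R) <= n%:R by []. by move=> h; apply/negP => /eqP; lra.
by rewrite /cc cos2pi sin2pi.
Qed.

Lemma zeta_neq0 : z != 0.
Proof.
apply/negP => /eqP h; have := zetaXN; rewrite h expr0n /= => /eqP.
by rewrite eq_sym oner_eq0.
Qed.

Lemma zetaX_ne1 k : (0 < k < N)%N -> z ^+ k != 1.
Proof.
move=> /andP[k0 kN]; rewrite zeta_cc ccX /cc.
apply/negP => /eqP [] hc _.
have : cos (k%:R * th) < 1.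
  apply: cos_lt1; have hpi := pi_gt0 R.
  have N0 : (0 : R) < N%:R by rewrite ltr0n.
  have k0' : (0 : R) < k%:R by rewrite ltr0n.
  have kN' : (k%:R : R) < N%:R by rewrite ltr_nat.
  have ht : th * N%:R = pi *+ 2.
    rewrite mulr2n. field. have : (0:R) <= n%:R by []. by move=> h; apply/negP => /eqP; lra.
  have t0 : 0 < th by apply: divr_gt0 => //; lra.
  have : k%:R * th < N%:R * th by rewrite ltr_pM2r.
  rewrite [N%:R * _]mulrC ht => h2.
  apply/andP; split => //; exact: mulr_gt0.
by rewrite hc ltxx.
Qed.

Lemma zeta_modz (a : int) : z ^ a = z ^+ (absz (a %% N)%Z).
Proof.
rewrite {1}(divz_eq a N) expfzDr ?zeta_neq0 //.
rewrite [((_ %/ _)%Z * _)]mulrC -exprz_exp.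
have -> : z ^ (N%:Z) = 1 by rewrite -exprnP /= zetaXN.
rewrite exp1rz mul1r.
have h := modz_ge0 a (isT : (N%:Z) != 0).
by rewrite -{1}(gez0_abs h) -exprnP.
Qed.

Lemma zetaDN (a b : int) : z ^ (a + N%:Z * b) = z ^ a.
Proof. by rewrite !zeta_modz addrC mulrC modzMDl. Qed.

Lemma zeta_eq1 (a : int) : (z ^ a == 1) = (N%:Z %| a)%Z.
Proof.
rewrite zeta_modz; apply/idP/idP; last first.
  by move=> /dvdz_mod0P ->.
apply: contraLR => hN.
have h0 := modz_ge0 a (isT : (N%:Z) != 0).
have hl := ltz_pmod a (isT : (0 < N%:Z)).
apply: zetaX_ne1; apply/andP; split.
  rewrite absz_gt0; apply: contra hN => /eqP h; exact/dvdz_mod0P.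
rewrite -ltz_nat gez0_abs //.
Qed.

End Zeta.

Fixpoint muf (f n : nat) : int :=
  if f is f'.+1 then (n == 1)%:Z - \sum_(i < n.-1 | (i.+1 %| n)%N) muf f' i.+1
  else 0.
Definition mu n := muf n n.

Lemma muf_stable f1 f2 n : (n <= f1)%N -> (n <= f2)%N -> muf f1 n = muf f2 n.
Proof.
elim: f1 f2 n => [|f1 IH] f2 n.
  rewrite leqn0 => /eqP -> _; case: f2 => //= f2; by rewrite big_ord0.
case: n => [|n] h1 h2.
  case: f2 h2 => [|f2] _ /=; rewrite ?big_ord0 /=; try done.
case: f2 h2 => [|f2] // h2 /=; congr (_ - _); apply: eq_bigr => i _.
apply: IH.
  by apply: leq_trans (ltn_ord i) _.
by apply: leq_trans (ltn_ord i) _.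
Qed.

Lemma mu_sum_self g : (0 < g)%N ->
  \sum_(i < g | (i.+1 %| g)%N) mu i.+1 = (g == 1)%:Z.
Proof.
case: g => // g _; rewrite big_mkcond big_ord_recr /= dvdnn -big_mkcond /=.
rewrite {2}/mu /= addrC -addrA.
have -> : \sum_(i < g | (i.+1 %| g.+1)%N) muf g i.+1 = \sum_(i < g | (i.+1 %| g.+1)%N) mu i.+1.
  apply: eq_bigr => i _; apply: muf_stable => //; exact: ltn_ord.
by rewrite addNr addr0.
Qed.

Lemma mu_sum g K : (0 < g)%N -> (g <= K)%N ->
  \sum_(i < K | (i.+1 %| g)%N) mu i.+1 = (g == 1)%:Z.
Proof.
move=> g0 gK; rewrite -(mu_sum_self _ g0) (big_ord_widen_cond K (fun i => (i.+1 %| g)%N) (fun i => mu i.+1) gK).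
apply: eq_bigl => i /=; case h: (i.+1 %| g)%N => //=.
by have := dvdn_leq g0 h.
Qed.

Lemma sum_mult_ord (C : nmodType) (F : nat -> C) e M K : (0 < e)%N -> K = (e * M)%N ->
  \sum_(u < K | (e %| u)%N) F u = \sum_(j < M) F (e * j)%N.
Proof.
move=> e0 ->; rewrite -(big_mkord (fun u => e %| u)%N).
elim: M => [|M IH]; first by rewrite muln0 big_ord0 big_geq.
rewrite big_ord_recr /= -IH (big_cat_nat _ (m := 0) (n := (e * M)%N)) //=; last first.
  by rewrite leq_pmul2l.
congr (_ + _).
have lt : (e * M < e * M.+1)%N by rewrite ltn_pmul2l.
rewrite big_ltn_cond // dvdn_mulr //.
rewrite big_nat_cond big1 ?addr0 // => u /andP[/andP[h1 h2] /dvdnP [q hq]].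
move: h1 h2; rewrite hq mulnC => h1 h2.
have a : (M < q)%N by rewrite -(ltn_pmul2r e0).
have b : (q < M.+1)%N by rewrite -(ltn_pmul2r e0) [(M.+1 * e)%N]mulnC.
by rewrite ltnS leqNgt a in b.
Qed.

Section Geo.
Variable R : realType.
Variable n : nat.
Local Notation N := n.+2.
Local Notation z := (zeta R n).

Lemma geo e (r : int) : (0 < e)%N -> (e %| N)%N ->
  \sum_(u < N | (e %| u)%N) z ^ (u%:Z * r) =
  if ((N %/ e)%:Z %| r)%Z then (N %/ e)%:R else 0.
Proof.
move=> e0 eN; set M := (N %/ e)%N.
have NeM : N = (e * M)%N by rewrite mulnC divnK.
rewrite (@sum_mult_ord _ (fun u => z ^ (u%:Z * r)) e M N e0 NeM).
set w := z ^ (e%:Z * r).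
have hw : forall j : nat, z ^ ((e * j)%N%:Z * r) = w ^+ j.
  move=> j; rewrite /w exprnP exprz_exp; congr (_ ^ _).
  by rewrite PoszM mulrAC.
under eq_bigr do rewrite hw.
have e0' : (e%:Z) != 0 by rewrite eqz_nat -lt0n.
have wM : w ^+ M = 1.
  rewrite /w exprnP exprz_exp -mulrA [r * _]mulrC mulrA -PoszM -NeM.
  by apply/eqP; rewrite zeta_eq1 dvdz_mulr.
case: ifP => hM.
  have -> : w = 1.
    apply/eqP; rewrite /w zeta_eq1 NeM PoszM dvdz_mul2l //.
  rewrite (eq_bigr (fun _ => 1)); last by move=> i _; rewrite expr1n.
  by rewrite sumr_const card_ord.
have w1 : w != 1.
  by rewrite /w zeta_eq1 NeM PoszM dvdz_mul2l // hM.
have h := subrX1 w M.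
rewrite wM subrr in h.
move/eqP: h; rewrite eq_sym mulf_eq0 subr_eq0 (negbTE w1) /=.
by move/eqP.
Qed.

Lemma Cform (r : int) :
  \sum_(u < N | coprime u N) z ^ (u%:Z * r) =
  \sum_(i < N | (i.+1 %| N)%N) (mu i.+1)%:~R *
     (if ((N %/ i.+1)%:Z %| r)%Z then (N %/ i.+1)%:R else 0).
Proof.
rewrite big_mkcond /=.
have step : forall u : 'I_N, (if coprime u N then z ^ (u%:Z * r) else 0) =
   \sum_(i < N | (i.+1 %| u)%N && (i.+1 %| N)%N) (mu i.+1)%:~R * z ^ (u%:Z * r).
  move=> u; rewrite -mulr_suml -rmorph_sum /=.
  under eq_bigl do rewrite -dvdn_gcd.
  have g0 : (0 < gcdn u N)%N by rewrite gcdn_gt0 orbT.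
  have gN : (gcdn u N <= N)%N by apply: dvdn_leq => //; exact: dvdn_gcdr.
  rewrite (mu_sum _ _ g0 gN) /coprime.
  by case: (gcdn u N == 1%N); rewrite ?mul1r ?mul0r.
under eq_bigr do rewrite step.
under eq_bigr do rewrite big_mkcond.
rewrite exchange_big /= [RHS]big_mkcond /=; apply: eq_bigr => i _.
case: (boolP (i.+1 %| N)%N) => hi.
  under eq_bigr do rewrite andbT.
  by rewrite -big_mkcond /= -mulr_sumr geo.
by apply: big1 => u _; rewrite andbF.
Qed.
End Geo.

Set Implicit Arguments.
Unset Strict Implicit.

Lemma two_sum_le (S : comRingType) (m : nat) (x : 'I_m -> S) :
  2 * (\sum_(i < m) \sum_(j < m | (i <= j)%N) x i * x j) =
  \sum_(i < m) x i ^+ 2 + (\sum_(i < m) x i) ^+ 2.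
Proof.
set A := \sum_(i < m) \sum_(j < m | (i < j)%N) x i * x j.
set D := \sum_(i < m) x i ^+ 2.
have h1 : \sum_(i < m) \sum_(j < m | (i <= j)%N) x i * x j = D + A.
  rewrite /D /A -big_split /=; apply: eq_bigr => i _.
  rewrite (bigD1 i) ?leqnn //= expr2; congr (_ + _).
  by apply: eq_bigl => j; rewrite ltn_neqAle eq_sym andbC.
have h2 : (\sum_(i < m) x i) ^+ 2 = D + A + A.
  rewrite expr2 mulr_suml -h1.
  have -> : \sum_(i < m) x i * \sum_(i0 < m) x i0 =
     \sum_(i < m) (\sum_(j < m | (i <= j)%N) x i * x j + \sum_(j < m | ~~ (i <= j)%N) x i * x j).
    apply: eq_bigr => i _; rewrite mulr_sumr; exact: bigID.
  rewrite big_split /=; congr (_ + _).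
  rewrite /A.
  have -> : \sum_(i < m) \sum_(j < m | ~~ (i <= j)%N) x i * x j =
            \sum_(i < m) \sum_(j < m) (if (j < i)%N then x i * x j else 0).
    apply: eq_bigr => i _; rewrite big_mkcond; apply: eq_bigr => j _.
    by rewrite -ltnNge.
  rewrite exchange_big /=; apply: eq_bigr => i _; rewrite [RHS]big_mkcond.
  by apply: eq_bigr => j _; case: ifP => //; rewrite mulrC.
rewrite h1 h2; ring.
Qed.

Lemma sum_perm (S : nmodType) m (q : {perm 'I_m}) (F : 'I_m -> S) :
  \sum_(i < m) F (q i) = \sum_(i < m) F i.
Proof. by rewrite (reindex_inj (@perm_inj _ (q^-1)%g)); apply: eq_bigr => i _; rewrite permKV. Qed.
Arguments sum_perm {S m} q F.

Section Xv.
Variable n : nat.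
Local Notation N := n.+2.

Definition xv (k : 'rV[int]_n) (t : 'I_N) : int :=
  match unlift ord0 t with
  | None => 0
  | Some t' => match unlift ord0 t' with
               | None => - \sum_(j < n) k 0 j
               | Some j => k 0 j end end.

Definition kv (x : 'I_N -> int) : 'rV[int]_n := \row_j x (lift ord0 (lift ord0 j)).

Lemma sum_ordS2 (S : nmodType) (F : 'I_N -> S) :
  \sum_(t < N) F t = F ord0 + F (lift ord0 ord0) + \sum_(j < n) F (lift ord0 (lift ord0 j)).
Proof. by rewrite big_ord_recl big_ord_recl addrA. Qed.

Lemma xv0 k : xv k ord0 = 0.
Proof. by rewrite /xv unlift_none. Qed.
Lemma xv1 k : xv k (lift ord0 ord0) = - \sum_(j < n) k 0 j.
Proof. by rewrite /xv liftK unlift_none. Qed.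
Lemma xv2 k (j : 'I_n) : xv k (lift ord0 (lift ord0 j)) = k 0 j.
Proof. by rewrite /xv !liftK. Qed.

Lemma sum_xv k : \sum_(t < N) xv k t = 0.
Proof. by rewrite sum_ordS2 xv0 xv1 add0r; under [X in _ + X]eq_bigr do rewrite xv2; rewrite addNr. Qed.

Lemma sq_xv k : \sum_(t < N) xv k t ^+ 2 = 2 * Qn k.
Proof.
rewrite sum_ordS2 xv0 xv1; under [X in _ + X]eq_bigr do rewrite xv2.
rewrite /Qn two_sum_le expr0n /= add0r sqrrN addrC.
by [].
Qed.

Lemma lin_xv k : lin_n k = \sum_(t < N) (t : nat)%:Z * xv k t.
Proof.
rewrite sum_ordS2 xv0 xv1 mul0r add0r.
under [X in _ = _ + X]eq_bigr do rewrite xv2.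
rewrite /lin_n /= mul1r.
have -> : \sum_(j < n) (lift ord0 (lift ord0 j) : nat)%:Z * k 0 j =
          \sum_(j < n) ((j.+1)%:Z * k 0 j + k 0 j).
  apply: eq_bigr => j _; rewrite /= /bump /= !add1n.
  by rewrite -[j.+2]addn1 PoszD mulrDl mul1r.
by rewrite big_split /= addrCA addNr addr0.
Qed.

Lemma kvK k : kv (xv k) = k.
Proof. by apply/matrixP => i j; rewrite mxE xv2 (ord1 i). Qed.

Lemma xvK (x : 'I_N -> int) : x ord0 = 0 -> \sum_(t < N) x t = 0 ->
  forall t, xv (kv x) t = x t.
Proof.
move=> x0 xs t; case: (unliftP ord0 t) => [t'|] ->; last by rewrite xv0.
case: (unliftP ord0 t') => [j|] ->; first by rewrite xv2 /kv mxE.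
rewrite xv1 /kv; under eq_bigr do rewrite mxE.
move: xs; rewrite sum_ordS2 x0 add0r.
by move/eqP; rewrite addrC addr_eq0 => /eqP ->; rewrite opprK.
Qed.

Definition psi (q : {perm 'I_N}) (k : 'rV[int]_n) : 'rV[int]_n :=
  kv (fun t => xv k (q t)).

Lemma xv_psi (q : {perm 'I_N}) (k : 'rV[int]_n) : q ord0 = ord0 -> forall t, xv (psi q k) t = xv k (q t).
Proof.
move=> q0; apply: xvK; first by rewrite q0 xv0.
by rewrite (sum_perm q (xv k)) sum_xv.
Qed.

Lemma Qn_psi (q : {perm 'I_N}) (k : 'rV[int]_n) : q ord0 = ord0 -> Qn (psi q k) = Qn k.
Proof.
move=> q0; apply: (@mulfI _ 2) => //.
rewrite -!sq_xv; under eq_bigr do rewrite xv_psi //.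
by rewrite (sum_perm q (fun t => xv k t ^+ 2)).
Qed.

Lemma psiK (q : {perm 'I_N}) (k : 'rV[int]_n) : q ord0 = ord0 -> psi q (psi (q^-1)%g k) = k.
Proof.
move=> q0.
have q0' : (q^-1)%g ord0 = ord0 by rewrite -{1}q0 permK.
rewrite /psi; under [X in kv X]funext do rewrite xv_psi // permK.
exact: kvK.
Qed.

Lemma lin_psi (q : {perm 'I_N}) (k : 'rV[int]_n) : q ord0 = ord0 ->
  lin_n (psi (q^-1)%g k) = \sum_(s < N) (q s : nat)%:Z * xv k s.
Proof.
move=> q0; have q0' : (q^-1)%g ord0 = ord0 by rewrite -{1}q0 permK.
rewrite lin_xv; under eq_bigr do rewrite xv_psi //.
rewrite -(sum_perm q); apply: eq_bigr => s _; by rewrite permK.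
Qed.

End Xv.

Local Open Scope classical_set_scope.
Set Implicit Arguments.
Unset Strict Implicit.

Section Sym.
Variable n : nat.
Local Notation N := n.+2.

Lemma mod_cancel u t s : coprime u N -> (t < N)%N -> (s < N)%N ->
  (u * t = u * s %[mod N])%N -> t = s.
Proof.
move=> cu; wlog le : t s / (s <= t)%N.
  move=> H tN sN h; case/orP: (leq_total s t) => hl; first exact: H.
  by apply/esym/H.
move=> tN sN /eqP; rewrite eqn_mod_dvd ?leq_mul2l ?le ?orbT // -mulnBr.
rewrite Gauss_dvdr; last by rewrite coprime_sym.
case: (posnP (t - s)%N) => [h0 _|hp /(dvdn_leq hp) hle].
  by apply/eqP; rewrite eqn_leq le andbT -subn_eq0 h0.
have : (t - s < N)%N by apply: leq_ltn_trans (leq_subr _ _) tN.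
by rewrite ltnNge hle.
Qed.

Definition mulu (u : nat) (t : 'I_N) : 'I_N :=
  Ordinal (ltn_pmod (u * t) (isT : (0 < N)%N)).

Lemma mulu_inj u : coprime u N -> injective (mulu u).
Proof.
move=> cu t s /(congr1 val) /= h; apply/val_inj.
exact: (mod_cancel cu (ltn_ord t) (ltn_ord s) h).
Qed.

Definition puq u (cu : coprime u N) : {perm 'I_N} := perm (mulu_inj cu).

Lemma puq0 u (cu : coprime u N) : puq cu ord0 = ord0.
Proof. by apply/val_inj; rewrite /puq permE /= muln0 mod0n. Qed.

Lemma zeta_psi (R : realType) u (cu : coprime u N) (k : 'rV[int]_n) :
  zeta R n ^ (lin_n (psi ((puq cu)^-1)%g k)) = zeta R n ^ (u%:Z * lin_n k).
Proof.
rewrite lin_psi ?puq0 // lin_xv mulr_sumr.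
have -> : \sum_(s < N) ((puq cu s : nat)%:Z * xv k s) =
   \sum_(s < N) ((u%:Z * (s : nat)%:Z) * xv k s) +
   N%:Z * (- \sum_(s < N) (((u * s) %/ N)%N%:Z * xv k s)).
  rewrite mulrN mulr_sumr -sumrN -big_split /=; apply: eq_bigr => s _.
  rewrite /puq permE /= mulrA -mulrBl; congr (_ * _).
  have h := divn_eq (u * s) N.
  rewrite -PoszM {2}h PoszD PoszM; ring.
rewrite zetaDN; congr (_ ^ _); apply: eq_bigr => s _; by rewrite mulrA.
Qed.

Lemma psiK' (q : {perm 'I_N}) (k : 'rV[int]_n) : q ord0 = ord0 ->
  psi (q^-1)%g (psi q k) = k.
Proof.
move=> q0; have q0' : (q^-1)%g ord0 = ord0 by rewrite -{1}q0 permK.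
by have := @psiK _ _ k q0'; rewrite invgK.
Qed.

Lemma psi_bij (q : {perm 'I_N}) (m : nat) : q ord0 = ord0 ->
  set_bij [set k : 'rV[int]_n | Qn k = m%:Z] [set k : 'rV[int]_n | Qn k = m%:Z] (psi q).
Proof.
move=> q0; have q0' : (q^-1)%g ord0 = ord0 by rewrite -{1}q0 permK.
split.
- by move=> k /= hk; rewrite Qn_psi.
- move=> k1 k2 _ _ h; by rewrite -(psiK' k1 q0) h psiK'.
- move=> k /= hk; exists (psi (q^-1)%g k); last exact: psiK.
  by rewrite /= Qn_psi.
Qed.

Lemma Qn_bound (k : 'rV[int]_n) (m : nat) : Qn k = m%:Z ->
  forall j, (absz (k 0%R j) <= 2 * m)%N.
Proof.
move=> hk j.
have h : xv k (lift ord0 (lift ord0 j)) ^+ 2 <= 2 * Qn k.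
  rewrite -sq_xv (bigD1 (lift ord0 (lift ord0 j))) //= lerDl.
  by apply: sumr_ge0 => i _; rewrite sqr_ge0.
move: h; rewrite xv2 hk => h.
have : k 0 j ^+ 2 <= (2 * m)%N%:Z by rewrite PoszM.
rewrite expr2; nia.
Qed.

Lemma finite_Qn (m : nat) : finite_set [set k : 'rV[int]_n | Qn k = m%:Z].
Proof.
pose f (y : 'rV['I_(4 * m).+1]_n) : 'rV[int]_n := \row_j ((y 0 j : nat)%:Z - (2 * m)%N%:Z).
apply: (sub_finite_set (B := f @` setT)); last first.
  by apply: finite_image; exact: finite_finset.
move=> k /= hk; exists (\row_j (inord (absz (k 0 j + (2 * m)%N%:Z)))) => //.
apply/matrixP => i j; rewrite !mxE (ord1 i).
have hb := Qn_bound hk j.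
rewrite inordK; last by lia.
have -> : ((absz (k 0 j + (2 * m)%N%:Z))%:Z = k 0 j + (2 * m)%N%:Z) by lia.
by rewrite addrK.
Qed.

End Sym.

Local Open Scope classical_set_scope.
Set Implicit Arguments.
Unset Strict Implicit.

Definition Gm (S : pzRingType) (m : nat) : 'M[S]_m := \matrix_(i, j) ((i <= j)%N)%:R.

Lemma qformG (R : realType) m (x : 'rV[R]_m) :
  qform (Gm R m) x = \sum_(i < m) \sum_(j < m | (i <= j)%N) x 0 i * x 0 j.
Proof.
rewrite /qform mxE.
under eq_bigr do rewrite !mxE mulr_suml.
under eq_bigr do under eq_bigr do rewrite !mxE.
rewrite exchange_big /=; apply: eq_bigr => i _.
rewrite [RHS]big_mkcond /=; apply: eq_bigr => j _.
by case: (i <= j)%N; rewrite ?mulr1 ?mulr0 ?mul0r.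
Qed.

Lemma qformG_int (R : realType) m (k : 'rV[int]_m) :
  qform (Gm R m) (zvec R k) = (Qn k)%:~R.
Proof.
rewrite qformG /Qn rmorph_sum; apply: eq_bigr => i _.
rewrite rmorph_sum; apply: eq_bigr => j _.
by rewrite /zvec !mxE rmorphM.
Qed.

Lemma qformG_pos (R : realType) m (x : 'rV[R]_m) : x != 0 -> 0 < qform (Gm R m) x.
Proof.
move=> x0.
have [i xi] : exists i, x 0 i != 0.
  apply/existsP; apply: contraR x0 => /existsPn h.
  apply/eqP/matrixP => a b; rewrite (ord1 a) mxE; exact/eqP/negbNE/h.
have h := two_sum_le (fun j => x 0 j).
rewrite qformG.
have D : x 0 i ^+ 2 <= \sum_(j < m) x 0 j ^+ 2.
  rewrite (bigD1 i) //= lerDl; apply: sumr_ge0 => j _; exact: sqr_ge0.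
have P : 0 < x 0 i ^+ 2 by rewrite exprn_even_gt0 // xi orbT.
have S2 : 0 <= (\sum_(j < m) x 0 j) ^+ 2 by exact: sqr_ge0.
lra.
Qed.

Section Sub.
Variable n : nat.
Local Notation M := n.+1.

Definition Bm (S : pzRingType) (d : nat) : 'M[S]_M :=
  \matrix_(i, j) (if j == ord0 then (if i == ord0 then d%:R else - (i.+1)%:R)
                  else (i == j)%:R).

Definition Ad (R : realType) (d : nat) : 'M[R]_M := Bm R d *m Gm R M *m (Bm R d)^T.

Lemma qformA (R : realType) d (x : 'rV[R]_M) :
  qform (Ad R d) x = qform (Gm R M) (x *m Bm R d).
Proof. by rewrite /qform /Ad trmx_mul !mulmxA. Qed.

Lemma Bm_map (R : realType) d : map_mx (fun z : int => z%:~R) (Bm int d) = Bm R d.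
Proof.
apply/matrixP => i j; rewrite !mxE.
case: (j == ord0); last by case: (i == j); rewrite ?rmorph1 ?rmorph0.
case: (i == ord0); first by rewrite rmorph_nat.
by rewrite rmorphN rmorph_nat.
Qed.

Lemma zvecM (R : realType) d (y : 'rV[int]_M) :
  zvec R y *m Bm R d = zvec R (y *m Bm int d).
Proof. by rewrite /zvec map_mxM Bm_map. Qed.

Lemma coordB (S : comPzRingType) d (x : 'rV[S]_M) j :
  (x *m Bm S d) 0 j = if j == ord0 then
     d%:R * x 0 ord0 - \sum_(i < M | i != ord0) (i.+1)%:R * x 0 i else x 0 j.
Proof.
rewrite mxE; case: ifP => hj.
  rewrite (bigD1 ord0) //= !mxE hj eqxx mulrC; congr (_ + _).
  rewrite -sumrN; apply: eq_bigr => i /negbTE hi.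
  by rewrite mxE hj hi mulrN mulrC.
rewrite (bigD1 j) //= big1 ?addr0; first by rewrite mxE hj eqxx mulr1.
by move=> i /negbTE hi; rewrite mxE hj hi mulr0.
Qed.

Lemma Bm_inj (S : numDomainType) d (x : 'rV[S]_M) : (0 < d)%N ->
  x *m Bm S d = 0 -> x = 0.
Proof.
move=> d0 h.
have hj : forall j, j != ord0 -> x 0 j = 0.
  move=> j hj; have := coordB d x j; rewrite (negbTE hj) h mxE => <- //.
have := coordB d x ord0; rewrite eqxx h mxE big1; last first.
  by move=> i hi; rewrite hj // mulr0.
rewrite subr0 => /esym/eqP; rewrite mulf_eq0 pnatr_eq0 (gtn_eqF d0) /= => /eqP h0.
apply/matrixP => a b; rewrite (ord1 a) mxE.
by case: (b =P ord0) => [->|/eqP hb]; [exact: h0|exact: hj].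
Qed.

Lemma lin_split (k : 'rV[int]_M) :
  lin_n k = k 0 ord0 + \sum_(i < M | i != ord0) (i.+1)%:R * k 0 i.
Proof. rewrite /lin_n (bigD1 ord0) //= mul1r; congr (_ + _); apply: eq_bigr => i _; by rewrite natz. Qed.

Lemma lin_B d (y : 'rV[int]_M) : lin_n (y *m Bm int d) = d%:Z * y 0 ord0.
Proof.
rewrite lin_split coordB eqxx.
have -> : \sum_(i < M | i != ord0) (i.+1)%:R * (y *m Bm int d) 0 i =
          \sum_(i < M | i != ord0) (i.+1)%:R * y 0 i.
  by apply: eq_bigr => i hi; rewrite coordB (negbTE hi).
by rewrite subrK natz.
Qed.

Lemma Ad_bij (R : realType) d (m : nat) : (0 < d)%N ->
  set_bij [set y : 'rV[int]_M | qform (Ad R d) (zvec R y) = m%:R]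
    ([set k : 'rV[int]_M | Qn k = m%:Z] `&` [set k | (d%:Z %| lin_n k)%Z])
    (fun y => y *m Bm int d).
Proof.
move=> d0.
have key : forall y : 'rV[int]_M, qform (Ad R d) (zvec R y) = (Qn (y *m Bm int d))%:~R.
  by move=> y; rewrite qformA zvecM qformG_int.
split.
- move=> y /= hy; split => /=.
    by apply: (@intr_inj R); rewrite -key hy -pmulrn.
  by rewrite lin_B dvdz_mulr.
- move=> y1 y2 _ _ /= h.
  apply/eqP; rewrite -subr_eq0; apply/eqP; apply: (Bm_inj d0).
  by rewrite mulmxBl h subrr.
- move=> k [/= hk hd].
  set y := \row_j (if j == ord0 then (lin_n k %/ d%:Z)%Z else k 0 j).
  have e : y *m Bm int d = k.
    apply/matrixP => a j; rewrite (ord1 a) coordB.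
    case: ifP => hj; last by rewrite mxE hj.
    rewrite mxE eqxx natz [_ * (_ %/ _)%Z]mulrC divzK // lin_split.
    have -> : \sum_(i < M | i != ord0) (i.+1)%:R * y 0 i
             = \sum_(i < M | i != ord0) (i.+1)%:R * k 0 i.
      by apply: eq_bigr => i hi; rewrite mxE (negbTE hi).
    by rewrite addrK (eqP hj).
  exists y => //.
  by rewrite /= key e hk -pmulrn.
Qed.

Lemma Ad_posdef (R : realType) d : (0 < d)%N -> int_valued_posdef (Ad R d).
Proof.
move=> d0; split.
  move=> y; exists (Qn (y *m Bm int d)).
  by rewrite qformA zvecM qformG_int.
move=> x x0; rewrite qformA; apply: qformG_pos.
by apply: contra x0 => /eqP /(Bm_inj d0) ->.
Qed.

Lemma thetaQ_Ad (R : realType) d (m : nat) : (0 < d)%N ->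
  thetaQ_coef (Ad R d) m =
  \sum_(k \in [set k : 'rV[int]_M | Qn k = m%:Z])
     (if (d%:Z %| lin_n k)%Z then (1 : R[i]) else 0).
Proof.
move=> d0; rewrite /thetaQ_coef.
rewrite -(reindex_fsbig _ _ _ (fun _ => (1 : R[i])) (Ad_bij R m d0)).
rewrite fsbig_mkcondr; apply: eq_fsbigr => k _.
case: ifPn => h; case: ifPn => h2 //.
  by move/set_mem: h => /= h; rewrite h in h2.
by move/negP: h; case; apply: mem_set.
Qed.

End Sub.

Unset Implicit Arguments.
Set Strict Implicit.
Local Open Scope classical_set_scope.

Lemma sym_sum (R : realType) n u (cu : coprime u n.+2) (m : nat) :
  \sum_(k \in [set k : 'rV[int]_n | Qn k = m%:Z]) zeta R n ^ (u%:Z * lin_n k) =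
  \sum_(k \in [set k : 'rV[int]_n | Qn k = m%:Z]) zeta R n ^ (lin_n k).
Proof.
have q0 : ((puq cu)^-1)%g ord0 = ord0 by rewrite -{1}(puq0 cu) permK.
rewrite (reindex_fsbig _ _ _ (fun k => zeta R n ^ (lin_n k)) (psi_bij m q0)).
by apply: eq_fsbigr => k _; rewrite zeta_psi.
Qed.

Theorem proposition3p1 (R : realType) (n : nat) : (1 <= n)%N ->
  exists N : nat, (1 <= N)%N /\
  exists (a : 'I_N -> rat) (A : 'I_N -> 'M[R]_n),
    (forall i, int_valued_posdef (A i)) /\
    forall m : nat,
      thetan_coef R n m = \sum_(i < N) (ratr (a i) : R[i]) * thetaQ_coef (A i) m.
Proof.
case: n => [|n] // _.
set NN := n.+3.
set Phi := (\sum_(u < NN | coprime u NN) 1)%N.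
have Phi0 : (0 < Phi)%N.
  rewrite /Phi (bigD1 (Ordinal (isT : (1 < NN)%N))) //= ?coprime1n //.
exists NN; split => //.
exists (fun i : 'I_NN => if (i.+1 %| NN)%N then ((mu i.+1)%:~R * (NN %/ i.+1)%:R / Phi%:R : rat) else 0).
exists (fun i : 'I_NN => Ad n R (NN %/ i.+1)).
have dpos : forall i : 'I_NN, (0 < NN %/ i.+1)%N by move=> i; rewrite divn_gt0 // ltn_ord.
split; first by move=> i; apply: Ad_posdef.
move=> m.
set X := [set k : 'rV[int]_(n.+1) | Qn k = m%:Z].
have fX : finite_set X := finite_Qn _ m.
pose z := zeta R n.+1.
have stepA : (Phi%:R : R[i]) * thetan_coef R n.+1 m =
   \sum_(k \in X) \sum_(u < NN | coprime u NN) z ^ (u%:Z * lin_n k).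
  rewrite /thetan_coef /Phi natr_sum mulr_suml.
  rewrite (eq_bigr (fun u : 'I_NN => \sum_(k \in X) z ^ (u%:Z * lin_n k))); last first.
    by move=> u cu; rewrite mul1r (@sym_sum R n.+1 u cu m).
  rewrite fsbig_finite //= exchange_big /=.
  apply: eq_bigr => u _; by rewrite fsbig_finite.
have stepB : \sum_(k \in X) \sum_(u < NN | coprime u NN) z ^ (u%:Z * lin_n k) =
   \sum_(i < NN | (i.+1 %| NN)%N) (mu i.+1)%:~R * (NN %/ i.+1)%:R *
       thetaQ_coef (Ad n R (NN %/ i.+1)) m.
  under eq_fsbigr => k _ do rewrite Cform.
  rewrite fsbig_finite // exchange_big /=; apply: eq_bigr => i hi.
  rewrite thetaQ_Ad // fsbig_finite // -[in RHS]mulrA big_distrr /= [RHS]big_distrr /=; apply: eq_bigr => k _.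
  by case: ifP => _; rewrite ?mulr1 ?mulr0.
have hPhi : (Phi%:R : R[i]) != 0 by rewrite pnatr_eq0 -lt0n.
apply: (mulfI hPhi); rewrite stepA stepB mulr_sumr.
rewrite [RHS](bigID (fun i : 'I_NN => (i.+1 %| NN)%N)) /= [X in _ = _ + X]big1 ?addr0; last first.
  by move=> i /negbTE ->; rewrite rmorph0 mul0r mulr0.
apply: eq_bigr => i ->.
rewrite !rmorphM /= fmorphV /= rmorph_int rmorph_nat rmorph_nat.
by field.
Qed.
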